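(* Let $P=\{x\in\mathbb{R}^n: Ax\le b,\ 0\le x_i\le u_i \text{ for } i\in I\}$ be a rational polyhedron with $I=\{1,\dots,l\}$ and positive integers $u_i$, and let $\mathcal{B}=(B^1,\dots,B^l)$ be a binarization scheme, $B^i\in\Gamma^{q_i}_{u_i}$, with $z_1\in\mathbb{R}^{q_1}$ the new variables associated with $x_1$. Then for any split set $S=\{(x,z)\in\mathbb{R}^{n+q}:\pi_0<\pi^Tz_1<\pi_0+1\}$ with $\pi\in\mathbb{Z}^{q_1}$ and $\pi_0\in\mathbb{Z}$, there exists a split set $S'=\{x\in\mathbb{R}^n:\sigma_0<\sigma^Tx<\sigma_0+1\}$ with $\sigma\in\mathbb{Z}^n$, $\sigma_j=0$ for $j\notin I$, and $\sigma_0\in\mathbb{Z}$, such that \[\operatorname{proj}_x(P_{\mathcal{B}}\setminus S)\supseteq P\setminus S'.\]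
   Context: For positive integers $q,u$, $\Gamma^q_u$ is the set of rational polytopes $B\subseteq\{(x,z)\in\mathbb{R}\times[0,1]^q:0\le x\le u\}$ with $\operatorname{proj}_x(B\cap(\mathbb{R}\times\{0,1\}^q))=\{0,1,\dots,u\}$. For a binarization scheme $\mathcal{B}=(B^1,\dots,B^l)$, $q=\sum_iq_i$ and $P_{\mathcal{B}}=\{(x,z)\in\mathbb{R}^n\times\mathbb{R}^q: x\in P,\ (x_i,z_i)\in B^i \text{ for } i\in I\}$, where $z=(z_1,\dots,z_l)$ with $z_i\in\mathbb{R}^{q_i}$. $\operatorname{proj}_x$ is orthogonal projection onto the $x$-coordinates. *)

(* Defs.v *)
From HB Require Import structures.
From mathcomp Require Import all_boot all_order all_algebra.
From mathcomp Require Import reals.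
Set Implicit Arguments. Unset Strict Implicit. Unset Printing Implicit Defensive.
Import Order.TTheory GRing.Theory Num.Theory.
Local Open Scope ring_scope.

Definition rat_polytope (R : realType) (q : nat) (B : R * 'cV[R]_q -> Prop) : Prop :=
  (exists (k : nat) (a : 'I_k -> rat) (C : 'I_k -> 'I_q -> rat) (d : 'I_k -> rat),
     forall p : R * 'cV[R]_q,
       B p <-> (forall j, ratr (a j) * p.1 + \sum_t ratr (C j t) * p.2 t 0 <= ratr (d j)))
  /\ (exists M : R, forall p, B p -> `|p.1| <= M /\ forall t, `|p.2 t 0| <= M).

Definition Gamma (R : realType) (q u : nat) (B : R * 'cV[R]_q -> Prop) : Prop :=
  [/\ rat_polytope B,
      (forall p, B p -> (0 <= p.1 <= u%:R) /\ forall t, 0 <= p.2 t 0 <= 1) &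
      (forall x : R,
         (exists z : 'cV[R]_q, (forall t, z t 0 = 0 \/ z t 0 = 1) /\ B (x, z))
         <-> (exists k : nat, (k <= u)%N /\ x = k%:R))].

Definition inP_poly (R : realType) (m n l : nat) (A : 'M[rat]_(m, n)) (b : 'cV[rat]_m)
  (hln : (l <= n)%N) (u : 'I_l -> nat) (x : 'cV[R]_n) : Prop :=
  (forall j, (map_mx ratr A *m x) j 0 <= ratr (b j 0)) /\
  (forall i : 'I_l, 0 <= x (widen_ord hln i) 0 <= (u i)%:R).

Definition inPB (R : realType) (m n l : nat) (A : 'M[rat]_(m, n)) (b : 'cV[rat]_m)
  (hln : (l <= n)%N) (u : 'I_l -> nat) (q : 'I_l -> nat)
  (Bs : forall i : 'I_l, R * 'cV[R]_(q i) -> Prop)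
  (x : 'cV[R]_n) (z : forall i : 'I_l, 'cV[R]_(q i)) : Prop :=
  inP_poly A b hln u x /\ forall i : 'I_l, Bs i (x (widen_ord hln i) 0, z i).

Definition idot (R : realType) (k : nat) (s : 'I_k -> int) (x : 'cV[R]_k) : R :=
  \sum_j (s j)%:~R * x j 0.

(* Main.v *)
Require Import Defs.
From HB Require Import structures.
From mathcomp Require Import all_boot all_order all_algebra.
From mathcomp Require Import reals.
From mathcomp Require Import ring lra zify.
From Stdlib Require Import Classical ClassicalEpsilon.
Import Order.TTheory GRing.Theory Num.Theory.
Local Open Scope ring_scope.

Lemma convB (R : realType) (q : nat) (B : R * 'cV[R]_q -> Prop) :
  rat_polytope B -> forall x1 x2 z1 z2 (t : R), 0 <= t <= 1 ->
  B (x1, z1) -> B (x2, z2) ->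
  B ((1 - t) * x1 + t * x2, (1 - t) *: z1 + t *: z2).
Proof.
move=> [[k [a [C [d HB]]]] _] x1 x2 z1 z2 t /andP[t0 t1] B1 B2.
apply/HB => j /=.
have /HB /(_ j) /= h1 := B1.
have /HB /(_ j) /= h2 := B2.
have e : \sum_t0 ratr (C j t0) * ((1 - t) *: z1 + t *: z2) t0 0 =
   (1 - t) * \sum_t0 ratr (C j t0) * z1 t0 0 + t * \sum_t0 ratr (C j t0) * z2 t0 0.
  rewrite !mulr_sumr -big_split /=; apply: eq_bigr => i _; rewrite !mxE; ring.
rewrite e.
set s1 := \sum_t0 _ in h1 *; set s2 := \sum_t0 _ in h2 *.
set aa := ratr (a j) in h1 h2 *; set dd := ratr (d j) in h1 h2 *.
have t1' : 0 <= 1 - t by lra.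
have := ler_wpM2l t1' h1; have := ler_wpM2l t0 h2.
move=> H2 H1.
have -> : aa * ((1 - t) * x1 + t * x2) + ((1 - t) * s1 + t * s2) =
  (1 - t) * (aa * x1 + s1) + t * (aa * x2 + s2) by ring.
lra.
Qed.

Lemma idot_comb (R : realType) q (pi : 'I_q -> int) (z1 z2 : 'cV[R]_q) (t : R) :
  idot pi ((1 - t) *: z1 + t *: z2) = (1 - t) * idot pi z1 + t * idot pi z2.
Proof.
rewrite /idot !mulr_sumr -big_split /=; apply: eq_bigr => i _; rewrite !mxE; ring.
Qed.

Lemma interp {R : realType} q (B : R * 'cV[R]_q -> Prop) (pi : 'I_q -> int) :
  rat_polytope B -> forall (a c x : R) za zc, a <= x <= c -> B (a, za) -> B (c, zc) ->
  exists z (t : R), [/\ 0 <= t <= 1, B (x, z) & idot pi z = (1 - t) * idot pi za + t * idot pi zc].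
Proof.
move=> HB a c x za zc /andP[ax xc] Ba Bc.
have [ac|ac] := eqVneq a c.
  have xa : x = a by subst c; apply/eqP; rewrite eq_le xc ax.
  exists za, 0; rewrite xa; split => //; first by rewrite lexx ler01.
  by rewrite subr0 mul1r mul0r addr0.
have cpos : 0 < c - a by rewrite subr_gt0 lt_neqAle ac (le_trans ax xc).
pose t := (x - a) / (c - a).
have t0 : 0 <= t by apply: divr_ge0; [rewrite subr_ge0|apply: ltW].
have t1 : t <= 1 by rewrite ler_pdivrMr // mul1r lerD2r.
exists ((1 - t) *: za + t *: zc), t; split.
- by rewrite t0 t1.
- have -> : x = (1 - t) * a + t * c.
    rewrite /t; field; by rewrite gt_eqF.
  by apply: convB => //; rewrite t0 t1.
- by rewrite idot_comb.
Qed.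

Lemma idot_bin {R : realType} q (pi : 'I_q -> int) (z : 'cV[R]_q) :
  (forall t, z t 0 = 0 \/ z t 0 = 1) -> exists w : int, idot pi z = w%:~R.
Proof.
move=> Hz.
exists (\sum_j pi j * (if z j 0 == 0 then 0 else 1)).
rewrite /idot rmorph_sum /=; apply: eq_bigr => j _.
rewrite rmorphM /=; case: (Hz j) => ->; rewrite ?eqxx //= ?oner_eq0 /=.
  all: by rewrite ?mulr0 ?mulr1.
Qed.

Definition side (R : realType) (p0 : int) (s : bool) (v : R) :=
  if s then v <= p0%:~R else p0%:~R + 1 <= v.
Arguments side {R}.

Lemma side_out (R : realType) p0 s (v : R) : side p0 s v -> ~ (p0%:~R < v < p0%:~R + 1).
Proof. by case: s => /= h /andP[h1 h2]; lra. Qed.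

Lemma side_comb (R : realType) p0 s (v1 v2 t : R) : 0 <= t <= 1 ->
  side p0 s v1 -> side p0 s v2 -> side p0 s ((1 - t) * v1 + t * v2).
Proof.
move=> /andP[t0 t1]; have t1' : 0 <= 1 - t by lra.
case: s => /= h1 h2.
  have := ler_wpM2l t1' h1; have := ler_wpM2l t0 h2; lra.
have := ler_wpM2l t1' h1; have := ler_wpM2l t0 h2; lra.
Qed.

Definition cls (R : realType) q (B : R * 'cV[R]_q -> Prop) (pi : 'I_q -> int) p0 s (k : nat) :=
  exists z, B (k%:R, z) /\ side p0 s (idot pi z).
Arguments cls {R q}.

Lemma cls_or (R : realType) q u (B : R * 'cV[R]_q -> Prop) pi p0 k :
  @Gamma R q u B -> (k <= u)%N -> cls B pi p0 true k \/ cls B pi p0 false k.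
Proof.
move=> [_ _ HG] ku.
have [z [zb Bz]] : exists z : 'cV[R]_q, (forall t, z t 0 = 0 \/ z t 0 = 1) /\ B (k%:R, z).
  by apply/HG; exists k.
have [w ew] := @idot_bin R q pi z zb.
have [wl|wg] := lerP w p0.
  by left; exists z; split => //=; rewrite ew ler_int.
have e1 : (p0 + 1)%:~R = p0%:~R + 1 :> R by rewrite intrD.
right; exists z; split => //=; rewrite ew -e1 ler_int; lia.
Qed.

Lemma cover_cls (R : realType) q (B : R * 'cV[R]_q -> Prop) pi p0 s (a c : nat) (x : R) :
  rat_polytope B -> cls B pi p0 s a -> cls B pi p0 s c -> a%:R <= x <= c%:R ->
  exists z, B (x, z) /\ ~ (p0%:~R < idot pi z < p0%:~R + 1).
Proof.
move=> HB [za [Ba sa]] [zc [Bc sc]] hx.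
have [z [t [ht Bz ez]]] := @interp R q B pi HB _ _ _ _ _ hx Ba Bc.
by exists z; split => //; apply: (@side_out R p0 s); rewrite ez; apply: side_comb.
Qed.

Lemma step (P : nat -> Prop) u : P 0%N -> ~ P u -> exists k, (k < u)%N /\ P k /\ ~ P k.+1.
Proof.
elim: u => [|u IH] h0 hu; first by [].
have [Pu|nPu] := classic (P u).
  by exists u; split.
have [k [ku hk]] := IH h0 nPu; exists k; split => //; exact: ltnW.
Qed.

Lemma glue (R : realType) (l : nat) (q : 'I_l -> nat) (T : forall i, 'cV[R]_(q i) -> Prop) (i0 : 'I_l)
  (z0 : 'cV[R]_(q i0)) (Q : 'cV[R]_(q i0) -> Prop) :
  T i0 z0 -> Q z0 -> (forall i, exists zi, T i zi) ->
  exists z : forall i, 'cV[R]_(q i), (forall i, T i (z i)) /\ Q (z i0).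
Proof.
move=> T0 Q0 HT.
have H : forall i, exists zi, T i zi /\ forall e : i0 = i, zi = eq_rect i0 (fun j => 'cV[R]_(q j)) z0 i e.
  move=> i; case: (eqVneq i0 i) => [e|ne].
    subst i; exists z0; split => // e; by rewrite (eq_irrelevance e erefl).
  have [zi Ti] := HT i; exists zi; split => // e; by rewrite e eqxx in ne.
exists (fun i => proj1_sig (constructive_indefinite_description _ (H i))).
split => [i|]; first by case: (constructive_indefinite_description _ (H i)) => zi [].
case: (constructive_indefinite_description _ (H i0)) => zi [_ E] /=; by rewrite (E erefl).
Qed.
Arguments cover_cls {R q B pi p0 s a c x}.
Arguments step {P u}.

Lemma fiber_ex (R : realType) q u (B : R * 'cV[R]_q -> Prop) (x : R) :
  @Gamma R q u B -> 0 <= x <= u%:R -> exists z, B (x, z).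
Proof.
move=> [HP _ HG] hx.
have [z0 [_ B0]] : exists z : 'cV[R]_q, (forall t, z t 0 = 0 \/ z t 0 = 1) /\ B (0%:R, z).
  by apply/HG; exists 0%N.
have [z1 [_ B1]] : exists z : 'cV[R]_q, (forall t, z t 0 = 0 \/ z t 0 = 1) /\ B (u%:R, z).
  by apply/HG; exists u.
have [z [t [_ Bz _]]] := @interp R q B (fun _ => 0) HP _ _ _ _ _ hx B0 B1.
by exists z.
Qed.

Lemma key (R : realType) q u (B : R * 'cV[R]_q -> Prop) (pi : 'I_q -> int) (p0 : int) :
  @Gamma R q u B -> exists k : nat, forall x : R, 0 <= x <= u%:R ->
   ~ (k%:R < x < k%:R + 1) -> exists z, B (x, z) /\ ~ (p0%:~R < idot pi z < p0%:~R + 1).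
Proof.
move=> G; have HP : rat_polytope B by case: G.
have [s Hs0] : exists s, cls B pi p0 s 0%N.
  by case: (@cls_or R q u B pi p0 0%N G (leq0n _)) => h; [exists true|exists false].
have neg : forall k, (k <= u)%N -> ~ cls B pi p0 s k -> cls B pi p0 (~~ s) k.
  by move=> k ku nk; case: (@cls_or R q u B pi p0 k G ku); case: s Hs0 nk => //= _ ? ? ?; exfalso; auto.
have [Hu|nHu] := classic (cls B pi p0 s u).
  exists 0%N => x hx _; apply: (cover_cls HP Hs0 Hu); exact: hx.
have [k [ku [hk nhk]]] := step Hs0 nHu.
have Hk1 := neg _ ku nhk.
have Hu' := neg _ (leqnn u) nHu.
exists k => x hx nx.
have [xk|xk] : x <= k%:R \/ k.+1%:R <= x.
  rewrite -natr1; case/andP: hx => h1 h2.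
  case: (lerP x k%:R) => a; [by left|right].
  case: (lerP (k%:R + 1) x) => b //; exfalso; apply: nx; by rewrite a b.
  apply: (cover_cls HP Hs0 hk); by case/andP: hx => -> _.
apply: (cover_cls HP Hk1 Hu'); by case/andP: hx => _ ->; rewrite xk.
Qed.

Theorem proposition5 (R : realType) (m n l : nat) (A : 'M[rat]_(m, n)) (b : 'cV[rat]_m)
  (hl : (0 < l)%N) (hln : (l <= n)%N) (u : 'I_l -> nat) (q : 'I_l -> nat)
  (Bs : forall i : 'I_l, R * 'cV[R]_(q i) -> Prop) :
  (forall i, (0 < u i)%N) -> (forall i, (0 < q i)%N) ->
  (forall i, @Gamma R (q i) (u i) (Bs i)) ->
  forall (pi : 'I_(q (Ordinal hl)) -> int) (pi0 : int),
  exists (sigma : 'I_n -> int) (sigma0 : int),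
    (forall j : 'I_n, (l <= j)%N -> sigma j = 0) /\
    (forall x : 'cV[R]_n,
       @inP_poly R m n l A b hln u x ->
       ~ (sigma0%:~R < @idot R n sigma x < sigma0%:~R + 1) ->
       exists z : forall i : 'I_l, 'cV[R]_(q i),
         @inPB R m n l A b hln u q Bs x z /\
         ~ (pi0%:~R < @idot R _ pi (z (Ordinal hl)) < pi0%:~R + 1)).
Proof.
move=> _ _ HG pi pi0.
have [k Hk] := @key R _ _ _ pi pi0 (HG (Ordinal hl)).
pose j0 := widen_ord hln (Ordinal hl).
exists (fun j => if j == j0 then 1 else 0), k%:Z; split.
  move=> j lj; case: eqP => // ej; exfalso.
  by move: lj; rewrite ej /= leqNgt hl.
move=> x Hx nx.
have ex : idot (fun j => if j == j0 then 1 else 0) x = x j0 0.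
  rewrite /idot (bigD1 j0) //= ?eqxx ?mul1r big1 ?addr0 // => j /negPf ->.
  by rewrite mul0r.
rewrite ex in nx.
have [z0 [Bz0 Qz0]] := Hk (x j0 0) (proj2 Hx (Ordinal hl)) nx.
have [z [Tz Qz]] := @glue R l q (fun i zi => Bs i (x (widen_ord hln i) 0, zi)) (Ordinal hl) z0
   (fun zi => ~ (pi0%:~R < idot pi zi < pi0%:~R + 1)) Bz0 Qz0
   (fun i => @fiber_ex R _ _ _ _ (HG i) (proj2 Hx i)).
by exists z; split => //; split.
Qed.
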